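(* Let $F$ be a closed continuous frieze pattern with period $T$. Then there is a $T$-periodic function $k:\mathbb{R}\to\mathbb{R}$ such that, for all $x,y$, $$F_{xx}(x,y)=k(x)F(x,y),\qquad F_{yy}(x,y)=k(y)F(x,y),$$ i.e. $F$, as a function of $x$ alone or of $y$ alone, satisfies the same Hill equation $u''=k u$; moreover every solution of $u''=ku$ is $T$-antiperiodic, $u(t+T)=-u(t)$ (the monodromy is $-\mathrm{Id}$).
   Context: A closed continuous frieze pattern with period $T>0$ is a smooth function $F:\mathbb{R}^2\to\mathbb{R}$ satisfying the Liouville-type equation $F F_{xy}-F_xF_y=1$ on $\mathbb{R}^2$ together with the conditions: $F(x,x)=0$ and $F_y(x,x)=1$ for all $x$ (here $F_y(x,x)$ means $\partial F/\partial y$ evaluated at $(x,x)$); $F(x,y)>0$ whenever $x<y<x+T$; and $F(x+T,y)=F(x,y+T)=-F(x,y)$ for all $x,y$. *)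

(* Defs.v *)
From Stdlib Require Import Reals.
Open Scope R_scope.

Definition continuous2 (f : R -> R -> R) : Prop :=
  forall x y eps, 0 < eps -> exists delta, 0 < delta /\
    forall x' y', Rabs (x' - x) < delta -> Rabs (y' - y) < delta ->
      Rabs (f x' y' - f x y) < eps.

(* [partials F D] : F is smooth (C^infinity) on R^2 and D i j is the
   mixed partial derivative d^i/dx^i d^j/dy^j F (all of them exist and
   are jointly continuous).  D is uniquely determined by F. *)
Definition partials (F : R -> R -> R) (D : nat -> nat -> R -> R -> R) : Prop :=
  D O O = F /\
  (forall i j x y, derivable_pt_lim (fun s => D i j s y) x (D (S i) j x y)) /\
  (forall i j x y, derivable_pt_lim (fun s => D i j x s) y (D i (S j) x y)) /\
  (forall i j, continuous2 (D i j)).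

Definition closed_frieze (F : R -> R -> R) (D : nat -> nat -> R -> R -> R) (T : R)
  : Prop :=
  0 < T /\
  partials F D /\
  (forall x y, F x y * D 1%nat 1%nat x y - D 1%nat 0%nat x y * D 0%nat 1%nat x y = 1) /\
  (forall x, F x x = 0) /\
  (forall x, D 0%nat 1%nat x x = 1) /\
  (forall x y, x < y < x + T -> 0 < F x y) /\
  (forall x y, F (x + T) y = - F x y) /\
  (forall x y, F x (y + T) = - F x y).

(* Main.v *)
Require Import Defs.
From Stdlib Require Import Reals Lra FunctionalExtensionality.
Open Scope R_scope.

Lemma cst_lem (f : R -> R) : (forall t, derivable_pt_lim f t 0) -> forall a b, f a = f b.
Proof.
  intros H a b.
  destruct (Rtotal_order a b) as [h|[h|h]].
  - destruct (MVT_cor2 f (fun _ => 0) a b h (fun c _ => H c)) as [c [e _]]. lra.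
  - subst; reflexivity.
  - destruct (MVT_cor2 f (fun _ => 0) b a h (fun c _ => H c)) as [c [e _]]. lra.
Qed.

Lemma dmul f g x a b : derivable_pt_lim f x a -> derivable_pt_lim g x b ->
  derivable_pt_lim (fun s => f s * g s) x (a * g x + f x * b).
Proof. intros; now apply derivable_pt_lim_mult. Qed.

Lemma dsub f g x a b : derivable_pt_lim f x a -> derivable_pt_lim g x b ->
  derivable_pt_lim (fun s => f s - g s) x (a - b).
Proof. intros; now apply derivable_pt_lim_minus. Qed.

Lemma dopp f x a : derivable_pt_lim f x a ->
  derivable_pt_lim (fun s => - f s) x (- a).
Proof. intros; now apply derivable_pt_lim_opp. Qed.

Lemma dcst c x : derivable_pt_lim (fun _ => c) x 0.
Proof. apply (derivable_pt_lim_const c x). Qed.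

Lemma deq f x a b : derivable_pt_lim f x a -> a = b -> derivable_pt_lim f x b.
Proof. intros H ->; exact H. Qed.

Lemma dshift f x T l : derivable_pt_lim f (x + T) l ->
  derivable_pt_lim (fun s => f (s + T)) x l.
Proof.
  intro H.
  assert (H1 : derivable_pt_lim (fun s => s + T) x 1).
  { apply (deq _ _ (1 + 0)); [| ring].
    apply (derivable_pt_lim_plus id (fun _ => T)); [apply derivable_pt_lim_id | apply dcst]. }
  apply (deq _ _ (l * 1)); [| ring].
  exact (derivable_pt_lim_comp (fun s => s + T) f x 1 l H1 H).
Qed.

Theorem mainTheorem2 (F : R -> R -> R) (D : nat -> nat -> R -> R -> R) (T : R) :
  closed_frieze F D T ->
  exists k : R -> R,
    (forall t, k (t + T) = k t) /\
    (forall x y, D 2%nat 0%nat x y = k x * F x y) /\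
    (forall x y, D 0%nat 2%nat x y = k y * F x y) /\
    (forall (u u' : R -> R),
        (forall t, derivable_pt_lim u t (u' t)) ->
        (forall t, derivable_pt_lim u' t (k t * u t)) ->
        forall t, u (t + T) = - u t).
Proof.
  intros [HT [[H00 [Dx [Dy _]]] [E [Fd [D01d [Pos [Px Py]]]]]]].
  subst F.
  set (F := D O O) in *.
  assert (Ex : forall x y, F x y * D 2%nat 1%nat x y - D 2%nat 0%nat x y * D 0%nat 1%nat x y = 0).
  { intros x y.
    assert (e : (fun s => F s y * D 1%nat 1%nat s y - D 1%nat 0%nat s y * D 0%nat 1%nat s y) = fun _ => 1).
    { apply functional_extensionality; intro; apply E. }
    assert (h : derivable_pt_lim (fun s => F s y * D 1%nat 1%nat s y - D 1%nat 0%nat s y * D 0%nat 1%nat s y) x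
       (F x y * D 2%nat 1%nat x y - D 2%nat 0%nat x y * D 0%nat 1%nat x y)).
    { eapply deq. apply dsub; apply dmul; apply Dx. unfold F; ring. }
    rewrite e in h. exact (uniqueness_limite _ _ _ _ h (dcst 1 x)). }
  assert (Ey : forall x y, F x y * D 1%nat 2%nat x y - D 1%nat 0%nat x y * D 0%nat 2%nat x y = 0).
  { intros x y.
    assert (e : (fun s => F x s * D 1%nat 1%nat x s - D 1%nat 0%nat x s * D 0%nat 1%nat x s) = fun _ => 1).
    { apply functional_extensionality; intro; apply E. }
    assert (h : derivable_pt_lim (fun s => F x s * D 1%nat 1%nat x s - D 1%nat 0%nat x s * D 0%nat 1%nat x s) y
       (F x y * D 1%nat 2%nat x y - D 1%nat 0%nat x y * D 0%nat 2%nat x y)).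
    { eapply deq. apply dsub; apply dmul; apply Dy. unfold F; ring. }
    rewrite e in h. exact (uniqueness_limite _ _ _ _ h (dcst 1 y)). }
  assert (Exy : forall x y, F x y * D 2%nat 2%nat x y - D 2%nat 0%nat x y * D 0%nat 2%nat x y = 0).
  { intros x y.
    assert (e : (fun s => F x s * D 2%nat 1%nat x s - D 2%nat 0%nat x s * D 0%nat 1%nat x s) = fun _ => 0).
    { apply functional_extensionality; intro; apply Ex. }
    assert (h : derivable_pt_lim (fun s => F x s * D 2%nat 1%nat x s - D 2%nat 0%nat x s * D 0%nat 1%nat x s) y
       (F x y * D 2%nat 2%nat x y - D 2%nat 0%nat x y * D 0%nat 2%nat x y)).
    { eapply deq. apply dsub; apply dmul; apply Dy. unfold F; ring. }
    rewrite e in h. exact (uniqueness_limite _ _ _ _ h (dcst 0 y)). }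
  set (H := fun x y => D 2%nat 0%nat x y * D 1%nat 2%nat x y - D 1%nat 0%nat x y * D 2%nat 2%nat x y).
  assert (FH : forall x y, F x y * H x y = 0).
  { intros x y. unfold H.
    replace (F x y * (D 2%nat 0%nat x y * D 1%nat 2%nat x y - D 1%nat 0%nat x y * D 2%nat 2%nat x y))
      with (D 2%nat 0%nat x y * (F x y * D 1%nat 2%nat x y - D 1%nat 0%nat x y * D 0%nat 2%nat x y)
            - D 1%nat 0%nat x y * (F x y * D 2%nat 2%nat x y - D 2%nat 0%nat x y * D 0%nat 2%nat x y)) by ring.
    rewrite Ey, Exy; ring. }
  assert (H0 : forall x y, H x y = 0).
  { intros x y.
    destruct (Req_dec (F x y) 0) as [z|nz].
    - assert (e : (fun s => F x s * H x s) = fun _ => 0).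
      { apply functional_extensionality; intro; apply FH. }
      assert (h : derivable_pt_lim (fun s => F x s * H x s) y
         (D 0%nat 1%nat x y * H x y + F x y *
           (D 2%nat 1%nat x y * D 1%nat 2%nat x y + D 2%nat 0%nat x y * D 1%nat 3%nat x y
            - (D 1%nat 1%nat x y * D 2%nat 2%nat x y + D 1%nat 0%nat x y * D 2%nat 3%nat x y)))).
      { apply dmul. apply Dy. unfold H. eapply deq. apply dsub; apply dmul; apply Dy. ring. }
      rewrite e in h. pose proof (uniqueness_limite _ _ _ _ h (dcst 0 y)) as u.
      rewrite z in u. pose proof (E x y) as e1. fold F in e1. rewrite z in e1.
      assert (D 0%nat 1%nat x y <> 0) by (intro c; rewrite c in e1; lra).
      apply (Rmult_eq_reg_l (D 0%nat 1%nat x y)); [lra | auto].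
    - pose proof (FH x y). apply (Rmult_eq_reg_l (F x y)); [lra | auto]. }
  set (h := fun x y => D 2%nat 0%nat x y * D 1%nat 1%nat x y - D 1%nat 0%nat x y * D 2%nat 1%nat x y).
  assert (hc : forall x y, h x y = h x x).
  { intros x y. apply (cst_lem (fun s => h x s)). intro t. unfold h.
    eapply deq. apply dsub; apply dmul; apply Dy. rewrite <- (H0 x t). unfold H. ring. }
  set (k := fun x => h x x).
  assert (K1 : forall x y, D 2%nat 0%nat x y = k x * F x y).
  { intros x y. unfold k. rewrite <- (hc x y). unfold h.
    pose proof (E x y) as e1. pose proof (Ex x y) as e2. fold F in e1.
    replace (D 2%nat 0%nat x y) with (D 2%nat 0%nat x y * 1) at 1 by ring.
    rewrite <- e1.
    replace ((D 2%nat 0%nat x y * D 1%nat 1%nat x y - D 1%nat 0%nat x y * D 2%nat 1%nat x y) * F x y)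
      with (D 2%nat 0%nat x y * F x y * D 1%nat 1%nat x y
            - D 1%nat 0%nat x y * (F x y * D 2%nat 1%nat x y - D 2%nat 0%nat x y * D 0%nat 1%nat x y)
            - D 1%nat 0%nat x y * D 2%nat 0%nat x y * D 0%nat 1%nat x y) by ring.
    rewrite e2. ring. }
  assert (D10d : forall s, D 1%nat 0%nat s s = -1).
  { intro s. pose proof (E s s) as e. fold F in e. rewrite Fd, D01d in e. lra. }
  (* Wronskian lemma *)
  assert (W : forall u u' : R -> R,
        (forall t, derivable_pt_lim u t (u' t)) ->
        (forall t, derivable_pt_lim u' t (k t * u t)) ->
        forall t s, u t * D 1%nat 0%nat t s - u' t * F t s = - u s).
  { intros u u' Hu Hu' t s.
    assert (c : forall a b, (fun t => u t * D 1%nat 0%nat t s - u' t * F t s) a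
                          = (fun t => u t * D 1%nat 0%nat t s - u' t * F t s) b).
    { apply cst_lem. intro a. eapply deq. apply dsub; apply dmul; auto; apply Dx.
      rewrite K1. unfold F; ring. }
    rewrite (c t s). simpl. rewrite D10d. fold F. rewrite Fd. ring. }
  assert (Anti : forall r s, F r s = - F s r).
  { intros r s.
    pose proof (W (fun t => F t r) (fun t => D 1%nat 0%nat t r) (fun t => Dx O O t r)
        (fun t => deq _ _ _ _ (Dx 1%nat O t r) (K1 t r)) r s) as w.
    simpl in w. rewrite Fd, D10d in w. lra. }
  exists k. split; [| split; [exact K1 | split]].
  - intro t.
    assert (A1 : forall x y, D 1%nat 0%nat (x + T) y = - D 1%nat 0%nat x y).
    { intros x y.
      assert (e : (fun s => F (s + T) y) = fun s => - F s y).
      { apply functional_extensionality; intro; apply Px. }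
      pose proof (dshift (fun s => D 0%nat 0%nat s y) x T _ (Dx O O (x + T) y)) as d.
      change (derivable_pt_lim (fun s => F (s + T) y) x (D 1%nat 0%nat (x + T) y)) in d.
      rewrite e in d. exact (uniqueness_limite _ _ _ _ d (dopp _ _ _ (Dx O O x y))). }
    assert (A2 : forall x y, D 2%nat 0%nat (x + T) y = - D 2%nat 0%nat x y).
    { intros x y.
      assert (e : (fun s => D 1%nat 0%nat (s + T) y) = fun s => - D 1%nat 0%nat s y).
      { apply functional_extensionality; intro; apply A1. }
      pose proof (dshift (fun s => D 1%nat 0%nat s y) x T _ (Dx 1%nat O (x + T) y)) as d.
      simpl in d. rewrite e in d. exact (uniqueness_limite _ _ _ _ d (dopp _ _ _ (Dx 1%nat O x y))). }
    set (y := t + T + T / 2).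
    assert (p : 0 < F (t + T) y) by (apply Pos; unfold y; lra).
    apply (Rmult_eq_reg_r (F (t + T) y)); [| lra].
    rewrite <- K1, A2, K1, Px. ring.
  - intros x y.
    assert (A : forall x y, D 0%nat 1%nat x y = - D 1%nat 0%nat y x).
    { intros a b.
      assert (e : (fun s => F a s) = fun s => - F s a).
      { apply functional_extensionality; intro; apply Anti. }
      pose proof (Dy O O a b) as d. change (derivable_pt_lim (fun s => F a s) b (D 0%nat 1%nat a b)) in d.
      rewrite e in d. exact (uniqueness_limite _ _ _ _ d (dopp _ _ _ (Dx O O b a))). }
    assert (e : (fun s => D 0%nat 1%nat x s) = fun s => - D 1%nat 0%nat s x).
    { apply functional_extensionality; intro; apply A. }
    pose proof (Dy O 1%nat x y) as d. rewrite e in d.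
    rewrite (uniqueness_limite _ _ _ _ d (dopp _ _ _ (Dx 1%nat O y x))).
    rewrite K1, (Anti y x). ring.
  - intros u u' Hu Hu' t.
    pose proof (W u u' Hu Hu' t (t + T)) as w.
    assert (a1 : D 1%nat 0%nat t (t + T) = 1).
    { assert (e : (fun s => F s (t + T)) = fun s => - F s t).
      { apply functional_extensionality; intro; apply Py. }
      pose proof (Dx O O t (t + T)) as d. change (derivable_pt_lim (fun s => F s (t+T)) t (D 1%nat 0%nat t (t + T))) in d.
      rewrite e in d. rewrite (uniqueness_limite _ _ _ _ d (dopp _ _ _ (Dx O O t t))).
      rewrite D10d. ring. }
    rewrite a1, Py, Fd in w. lra.
Qed.
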